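(* Let $A\in\mathbb{C}^{m\times n}$. Then the following are equivalent: (1) $A^{\mathfrak{m}}$ exists; (2) there exists $X\in\mathbb{C}^{m\times m}$ such that $A=XAA^{\sim}A$; (3) there exists $Y\in\mathbb{C}^{n\times n}$ such that $A=AA^{\sim}AY$. In this case, for any such $X$ and $Y$, $A^{\mathfrak{m}}=(XA)^{\sim}=(AY)^{\sim}$.
   Context: For a positive integer $k$, the Minkowski metric matrix of order $k$ is $G_k=\mathrm{diag}(1,-I_{k-1})$ (with $G_1=(1)$). For $A\in\mathbb{C}^{m\times n}$, the Minkowski adjoint is $A^{\sim}=G_nA^*G_m$, where $A^*$ is the conjugate transpose. The Minkowski inverse of $A$, denoted $A^{\mathfrak{m}}$, is a matrix $Z\in\mathbb{C}^{n\times m}$ with $AZA=A$, $ZAZ=Z$, $(AZ)^{\sim}=AZ$, $(ZA)^{\sim}=ZA$ (unique if it exists). *)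

(* Defs.v *)
From HB Require Import structures.
From mathcomp Require Import all_boot all_order all_algebra.
From mathcomp Require Import reals.
From mathcomp.real_closed Require Import complex.
Set Implicit Arguments. Unset Strict Implicit. Unset Printing Implicit Defensive.
Import Order.TTheory GRing.Theory Num.Theory.
Local Open Scope ring_scope.

Definition ctrmx (C : numClosedFieldType) (m n : nat) (A : 'M[C]_(m, n)) : 'M[C]_(n, m) :=
  (map_mx Num.conj A)^T.

Definition minkG (C : numClosedFieldType) (k : nat) : 'M[C]_k :=
  \matrix_(i < k, j < k) (if i == j then (if (i : nat) == 0%N then 1 else -1) else 0).

Definition madj (C : numClosedFieldType) (m n : nat) (A : 'M[C]_(m, n)) : 'M[C]_(n, m) :=
  minkG C n *m ctrmx A *m minkG C m.

Definition is_minkowski_inverse (C : numClosedFieldType) (m n : nat)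
    (A : 'M[C]_(m, n)) (Z : 'M[C]_(n, m)) : Prop :=
  [/\ A *m Z *m A = A, Z *m A *m Z = Z,
      madj (A *m Z) = A *m Z & madj (Z *m A) = Z *m A].

(* Main.v *)
Require Import Defs.
From HB Require Import structures.
From mathcomp Require Import all_boot all_order all_algebra.
From mathcomp Require Import reals.
From mathcomp.real_closed Require Import complex.
Import Order.TTheory GRing.Theory Num.Theory.
Local Open Scope ring_scope.

Section H.
Variable C : numClosedFieldType.

Lemma minkGG k : minkG C k *m minkG C k = 1%:M.
Proof.
apply/matrixP => i j; rewrite !mxE (bigD1 i) //= big1 => [|l /negbTE nl].
  rewrite !mxE eqxx addr0; have [->|nij] := eqVneq i j.
    by case: ifP => _; rewrite ?mulr1 ?mulrNN ?mulr1.
  by rewrite mulr0.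
by rewrite !mxE eq_sym nl mul0r.
Qed.

Lemma ctrG k : ctrmx (minkG C k) = minkG C k.
Proof.
apply/matrixP => i j; rewrite /ctrmx !mxE eq_sym.
have [->|_] := eqVneq j i; last by rewrite rmorph0.
by case: ifP => _; rewrite ?rmorphN rmorph1.
Qed.

Lemma ctrM m n p (A : 'M[C]_(m, n)) (B : 'M[C]_(n, p)) :
  ctrmx (A *m B) = ctrmx B *m ctrmx A.
Proof. by rewrite /ctrmx map_mxM trmx_mul. Qed.

Lemma ctrK m n (A : 'M[C]_(m, n)) : ctrmx (ctrmx A) = A.
Proof.
by apply/matrixP => i j; rewrite /ctrmx !mxE conjCK.
Qed.

Lemma madjM m n p (A : 'M[C]_(m, n)) (B : 'M[C]_(n, p)) :
  madj (A *m B) = madj B *m madj A.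
Proof.
rewrite /madj ctrM !mulmxA; congr (_ *m _).
by rewrite -[_ *m minkG C n *m minkG C n]mulmxA minkGG mulmx1.
Qed.

Lemma madjK m n (A : 'M[C]_(m, n)) : madj (madj A) = A.
Proof.
rewrite /madj !ctrM ctrK !ctrG !mulmxA minkGG mul1mx -mulmxA minkGG mulmx1.
done.
Qed.

Lemma rankXY (F : fieldType) m n (A : 'M[F]_(m, n)) (B : 'M[F]_(n, m)) :
  (exists X, A = X *m A *m B *m A) <-> (exists Y, A = A *m B *m A *m Y).
Proof.
split.
- case=> X EA.
  have r1 : (\rank A <= \rank (A *m B *m A))%N.
    have E : X *m A *m B *m A = X *m (A *m B *m A) by rewrite !mulmxA.
    by rewrite {1}EA E; exact: mxrankM_maxr.
  have s : ((A *m B *m A)^T <= A^T)%MS by rewrite -mulmxA trmx_mul submxMl.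
  case: (mxrank_leqif_eq s) => _ Eq.
  have : ((A *m B *m A)^T == A^T)%MS by rewrite -Eq !mxrank_tr eqn_leq r1 mxrankM_maxr.
  case/andP => _ /submxP[D ED].
  by exists D^T; apply: (can_inj (@trmxK _ _ _)); rewrite trmx_mul trmxK -ED.
- case=> Y EA.
  have r1 : (\rank A <= \rank (A *m B *m A))%N.
    by rewrite {1}EA; exact: mxrankM_maxl.
  have s : (A *m B *m A <= A)%MS by rewrite submxMl.
  case: (mxrank_leqif_eq s) => _ Eq.
  have : ((A *m B *m A) == A)%MS by rewrite -Eq eqn_leq r1 mxrankM_maxr.
  case/andP => _ /submxP[D ED].
  by exists D; rewrite {1}ED !mulmxA.
Qed.
Arguments madjM {m n p} A B.
Arguments madjK {m n} A.

Lemma alg_XY m n (A : 'M[C]_(m, n)) X Y B Z Z' Xa Ya :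
  A = X *m A *m B *m A -> A = A *m B *m A *m Y ->
  B = B *m (A *m Z) -> B = Z' *m (A *m B) ->
  Z = B *m Xa -> Z' = Ya *m B ->
  [/\ Z = Z', A *m Z *m A = A, Z *m A *m Z = Z,
      X *m A *m B = A *m Z & B *m (A *m Y) = Z *m A].
Proof.
move=> EA EA' hB1 hB2 hZ hZ'.
have e1 : Z = Z' *m A *m Z by rewrite {1}hZ {1}hB2 hZ !mulmxA.
have e2 : Z' = Z' *m A *m Z by rewrite {1}hZ' {1}hB1 hZ' !mulmxA.
have ZZ : Z = Z' by rewrite e1 -e2.
rewrite -ZZ in hB2 e1 *.
split => //.
- by rewrite {1}EA -(mulmxA (X *m A *m B) A Z) -(mulmxA (X *m A) B) -hB1 -EA.
- by rewrite [in RHS]EA -(mulmxA (X *m A *m B) A Z) -(mulmxA (X *m A) B) -hB1.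
- by rewrite [in LHS]hB2 -mulmxA; congr (_ *m _); rewrite !mulmxA -EA'.
Qed.

Lemma inv_XY m n (A : 'M[C]_(m, n)) X Y :
  A = X *m A *m madj A *m A -> A = A *m madj A *m A *m Y ->
  is_minkowski_inverse A (madj (X *m A)) /\ madj (X *m A) = madj (A *m Y).
Proof.
move=> EA EA'.
have hB1 : madj A = madj A *m (A *m madj (X *m A)).
  by rewrite [in LHS]EA (madjM (X *m A *m madj A) A) (madjM (X *m A) (madj A)) (madjK A).
have hB2 : madj A = madj (A *m Y) *m (A *m madj A).
  rewrite [in LHS]EA' (madjM (A *m madj A *m A) Y) (madjM (A *m madj A) A).
  by rewrite (madjM A (madj A)) (madjK A) (madjM A Y) -mulmxA.
have hZ := madjM X A; have hZ' := madjM A Y.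
have mZ := madjK (X *m A); have mZ' := madjK (A *m Y).
have c3 := madjM A (madj (X *m A)); have c4 := madjM (madj (X *m A)) A.
move: (madj (X *m A)) (madj (A *m Y)) (madj A) (madj X) (madj Y) EA EA' hB1 hB2 hZ hZ' mZ mZ' c3 c4
  => Z Z' B Xa Ya EA EA' hB1 hB2 hZ hZ' mZ mZ' c3 c4.
have [ZZ a b c d] := alg_XY _ _ _ _ _ _ _ _ _ _ EA EA' hB1 hB2 hZ hZ'.
split => //; split => //.
- by rewrite c3 mZ; exact: c.
- by rewrite c4 {1}ZZ mZ'; exact: d.
Qed.

Lemma alg_uniq m n (A : 'M[C]_(m, n)) Z1 Z2 B W1 W2 :
  Z1 *m A *m Z1 = Z1 -> Z2 *m A *m Z2 = Z2 ->
  W1 *m B = A *m Z1 -> W2 *m B = A *m Z2 ->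
  B *m W1 = Z1 *m A -> B *m W2 = Z2 *m A ->
  B *m (W1 *m B) = B -> B *m (W2 *m B) = B -> Z1 = Z2.
Proof.
move=> b1 b2 p1 p2 q1 q2 r1 r2.
have e1 : Z1 = Z1 *m A *m Z2.
  rewrite -{1}b1 -mulmxA -p1 -{1}r2 !mulmxA -(mulmxA Z1 W1 B) p1.
  by rewrite -(mulmxA _ W2 B) p2 !mulmxA b1.
have e2 : Z2 = Z1 *m A *m Z2.
  rewrite -{1}b2 -q2 -{1}r1 !mulmxA q1 -(mulmxA (Z1 *m A) B W2) q2.
  by rewrite -(mulmxA (Z1 *m A) (Z2 *m A) Z2) b2.
by rewrite e1 -e2.
Qed.

Lemma inv_uniq m n (A : 'M[C]_(m, n)) Z1 Z2 :
  is_minkowski_inverse A Z1 -> is_minkowski_inverse A Z2 -> Z1 = Z2.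
Proof.
case=> a1 b1 c1 d1 [a2 b2 c2 d2].
have r1 : madj A *m (madj Z1 *m madj A) = madj A.
  by rewrite -(madjM A Z1) -(madjM (A *m Z1) A) a1.
have r2 : madj A *m (madj Z2 *m madj A) = madj A.
  by rewrite -(madjM A Z2) -(madjM (A *m Z2) A) a2.
rewrite (madjM A Z1) in c1; rewrite (madjM A Z2) in c2.
rewrite (madjM Z1 A) in d1; rewrite (madjM Z2 A) in d2.
move: (madj A) (madj Z1) (madj Z2) c1 c2 d1 d2 r1 r2 => B W1 W2 c1 c2 d1 d2 r1 r2.
exact: (alg_uniq _ _ _ _ _ _ _ _ b1 b2 c1 c2 d1 d2 r1 r2).
Qed.

Lemma XofZ m n (A : 'M[C]_(m, n)) Z : is_minkowski_inverse A Z ->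
  A = (madj Z *m Z) *m A *m madj A *m A.
Proof.
case=> a b c d.
have hA : A = madj Z *m madj A *m A by rewrite -(madjM A Z) c a.
have hB : madj A = Z *m A *m madj A by rewrite -[in LHS]a (madjM (A *m Z) A) (madjM A Z) mulmxA -(madjM Z A) d.
move: (madj A) (madj Z) hA hB => B W hA hB.
by rewrite {1}hA {1}hB !mulmxA.
Qed.
End H.

Theorem theorem6p1 (R : realType) (m n : nat) (Hm : (0 < m)%N) (Hn : (0 < n)%N)
    (A : 'M[R[i]]_(m, n)) :
  [/\ (exists Z, is_minkowski_inverse A Z) <->
        (exists X : 'M[R[i]]_m, A = X *m A *m madj A *m A),
      (exists X : 'M[R[i]]_m, A = X *m A *m madj A *m A) <->
        (exists Y : 'M[R[i]]_n, A = A *m madj A *m A *m Y),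
      (forall (X : 'M[R[i]]_m) (Z : 'M[R[i]]_(n, m)),
         A = X *m A *m madj A *m A -> is_minkowski_inverse A Z ->
         Z = madj (X *m A))
    & (forall (Y : 'M[R[i]]_n) (Z : 'M[R[i]]_(n, m)),
         A = A *m madj A *m A *m Y -> is_minkowski_inverse A Z ->
         Z = madj (A *m Y))].
Proof.
have XY := @rankXY _ _ _ A (madj A).
split => //.
- split; first by case=> Z hZ; exists (madj Z *m Z); exact: (@XofZ _ _ _ A).
  case=> X EX; have [Y EY] := XY.1 (ex_intro _ X EX).
  by exists (madj (X *m A)); case: (@inv_XY _ _ _ A _ _ EX EY).
- move=> X Z EX hZ; have [Y EY] := XY.1 (ex_intro _ X EX).
  by case: (@inv_XY _ _ _ A _ _ EX EY) => h _; exact: (@inv_uniq _ _ _ A _ _ hZ h).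
- move=> Y Z EY hZ; have [X EX] := XY.2 (ex_intro _ Y EY).
  by case: (@inv_XY _ _ _ A _ _ EX EY) => h <-; exact: (@inv_uniq _ _ _ A _ _ hZ h).
Qed.
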